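(* Assume Non-Degeneracy Assumption I, and let $U,P$ be the optimal solutions constructed from a base sequence and a nonnegative solution of the base-sequence system as in the Structure Theorem part (i). Let $\check U=\sum_n\tau_nu^n$, $\check P=\sum_n\tau_np^n$, and define $\underline{x}\in\mathbb{R}^K$, $\underline{q}\in\mathbb{R}^J$ by $$\underline{x}_k=-\min\Big\{0,\ \min_{1\le n\le N}\sum_{m=1}^n\dot x^m_k\tau_m\Big\},\qquad \underline{q}_j=-\min\Big\{0,\ \min_{1\le n\le N}\sum_{m=n}^N\dot q^m_j\tau_m\Big\}.$$ Then $(\mathbf{u}^0,\mathbf{u}^N)$ is an optimal solution of $$\max\ (\gamma+cT)^\top\mathbf{u}^0+\gamma^\top\mathbf{u}^N\ \text{ s.t. } A\mathbf{u}^0\le\beta-\underline{x},\ A\mathbf{u}^0+A\mathbf{u}^N\le\beta+bT-A\check U,\ \mathbf{u}^0,\mathbf{u}^N\ge0,$$ and $(\mathbf{p}^N,\mathbf{p}^0)$ is an optimal solution of $$\min\ (\beta+bT)^\top\mathbf{p}^N+\beta^\top\mathbf{p}^0\ \text{ s.t. } A^\top\mathbf{p}^N\ge\gamma+\underline{q},\ A^\top\mathbf{p}^N+A^\top\mathbf{p}^0\ge\gamma+cT-A^\top\check P,\ \mathbf{p}^N,\mathbf{p}^0\ge0.$$ (These two LPs are not dual to each other.)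
   Context: Let $A$ be a real $K\times J$ matrix, $\beta,b\in\mathbb{R}^K$, $\gamma,c\in\mathbb{R}^J$, $T>0$. M-CLP: maximize $\int_{0-}^T(\gamma+(T-t)c)^\top dU(t)$ over nonnegative, non-decreasing, right-continuous $U:[0,T]\to\mathbb{R}^J$ with $U(0-)=0$, subject to $AU(t)\le\beta+bt$, $0\le t\le T$. M-CLP$^*$: minimize $\int_{0-}^T(\beta+(T-t)b)^\top dP(t)$ over nonnegative, non-decreasing, right-continuous $P:[0,T]\to\mathbb{R}^K$ with $P(0-)=0$, subject to $A^\top P(t)\ge\gamma+ct$. Non-Degeneracy Assumption I: $b$ is not a linear combination of fewer than $K$ columns of $[A\ I]$ and $c$ is not a linear combination of fewer than $J$ columns of $[A^\top\ I]$. Bases: index sets $\mathcal{K}\subseteq\{1..K\},\mathcal{J}\subseteq\{1..J\}$ such that $\dot x_k$ ($k\in\mathcal{K}$), $u_j$ ($j\notin\mathcal{J}$) are $K$ variables with independent columns in $[A\ I]$; primal basic solution solves $Au+\dot x=b$ with $u_j=0$ ($j\in\mathcal{J}$), $\dot x_k=0$ ($k\notin\mathcal{K}$); dual basic solution solves $A^\top p-\dot q=c$ with $p_k=0$ ($k\in\mathcal{K}$), $\dot q_j=0$ ($j\notin\mathcal{J}$). Admissible: $u,p\ge0$. Adjacent: one pivot apart, primal variable $v_n$ leaving from $B_n$ to $B_{n+1}$. A base sequence consists of admissible, consecutively adjacent bases $B_1..B_N$ (index sets $\mathcal{K}_n,\mathcal{J}_n$, rates $u^n,\dot x^n,p^n,\dot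 q^n$) plus index sets $\mathcal{K}_0,\mathcal{J}_0,\mathcal{K}_{N+1},\mathcal{J}_{N+1}$ with $\mathcal{K}_0\subseteq\mathcal{K}_1$, $\mathcal{J}_{N+1}\subseteq\mathcal{J}_N$. The base-sequence system in unknowns $\mathbf{u}^0,\mathbf{u}^N,q^N,\mathbf{q}^0\in\mathbb{R}^J$, $x^0,\mathbf{x}^N,\mathbf{p}^0,\mathbf{p}^N\in\mathbb{R}^K$, $\tau_1..\tau_N$, with $x^n=x^0+\sum_{m\le n}\dot x^m\tau_m$, $q^n=q^N+\sum_{m>n}\dot q^m\tau_m$, is: (a) $x^n_k=0$ if $v_n=\dot x_k$, $q^n_j=0$ if $v_n=u_j$ ($n=1..N-1$); (b) $\sum\tau_n=T$; (c) $\mathbf{u}^0_j=0$ ($j\in\mathcal{J}_0$), $x^0_k=0$ ($k\notin\mathcal{K}_0$), $\mathbf{p}^0_k=0$ ($k\in\mathcal{K}_0$), $\mathbf{q}^0_j=0$ ($j\notin\mathcal{J}_0$), $\mathbf{p}^N_k=0$ ($k\in\mathcal{K}_{N+1}$), $q^N_j=0$ ($j\notin\mathcal{J}_{N+1}$), $\mathbf{u}^N_j=0$ ($j\in\mathcal{J}_{N+1}$), $\mathbf{x}^N_k=0$ ($k\notin\mathcal{K}_{N+1}$); (d) $A\mathbf{u}^0+x^0=\beta$, $A^\top\mathbf{p}^N-q^N=\gamma$; (e) $A\mathbf{u}^N+\mathbf{x}^N-x^N=0$, $A^\top\mathbf{p}^0-\mathbf{q}^0+q^0=0$. Constructed functions: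 $t_n=\sum_{m\le n}\tau_m$, $u(t)=u^n$ on $(t_{n-1},t_n)$, $U(t)=\mathbf{u}^0+\int_0^tu$ ($t<T$), $U(T)=U(T-)+\mathbf{u}^N$; $p(s)=p^n$ on $(T-t_n,T-t_{n-1})$, $P(s)=\mathbf{p}^N+\int_0^sp$ ($s<T$), $P(T)=P(T-)+\mathbf{p}^0$. *)

(* Defs.v *)
From HB Require Import structures.
From mathcomp Require Import all_boot all_order all_algebra.
Set Implicit Arguments. Unset Strict Implicit. Unset Printing Implicit Defensive.
Import Order.TTheory GRing.Theory Num.Theory.
Local Open Scope ring_scope.

Section Defs.
Variable R : realFieldType.

Definition vle n (v w : 'cV[R]_n) : Prop := forall i, v i 0 <= w i 0.
Definition vnonneg n (v : 'cV[R]_n) : Prop := forall i, 0 <= v i 0.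

Variables (K J : nat).

(* Non-Degeneracy Assumption I.
   b is not a linear combination of fewer than K columns of [A I]:
   any combination A*lam + mu of columns of [A I] equal to b uses at least K
   columns with nonzero coefficient; similarly for c and [A^T I]. *)
Definition nondegenerate_I (A : 'M[R]_(K, J)) (b : 'cV[R]_K) (c : 'cV[R]_J) : Prop :=
  (forall (lam : 'cV[R]_J) (mu : 'cV[R]_K),
      (#|[set j | lam j ord0 != 0%R]| + #|[set k | mu k ord0 != 0%R]| < K)%N ->
      A *m lam + mu <> b) /\
  (forall (lam : 'cV[R]_K) (mu : 'cV[R]_J),
      (#|[set k | lam k ord0 != 0%R]| + #|[set j | mu j ord0 != 0%R]| < J)%N ->
      A^T *m lam + mu <> c).

(* Primal variables of a base: inl j = u_j, inr k = xdot_k.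
   Basic variables of base (Ks, Js): xdot_k (k in Ks), u_j (j notin Js). *)
Definition basic_set (Ks : {set 'I_K}) (Js : {set 'I_J}) : {set 'I_J + 'I_K} :=
  [set v | match v with inl j => j \notin Js | inr k => k \in Ks end].

(* (Ks, Js) is a base: the K basic variables have linearly independent
   columns in [A I]. *)
Definition is_base (A : 'M[R]_(K, J)) (Ks : {set 'I_K}) (Js : {set 'I_J}) : Prop :=
  #|basic_set Ks Js| = K /\
  forall (u : 'cV[R]_J) (xd : 'cV[R]_K),
    (forall j, j \in Js -> u j 0 = 0) ->
    (forall k, k \notin Ks -> xd k 0 = 0) ->
    A *m u + xd = 0 -> u = 0 /\ xd = 0.

Definition primal_basic_sol (A : 'M[R]_(K, J)) (b : 'cV[R]_K)
    (Ks : {set 'I_K}) (Js : {set 'I_J}) (u : 'cV[R]_J) (xd : 'cV[R]_K) : Prop :=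
  A *m u + xd = b /\ (forall j, j \in Js -> u j 0 = 0) /\
  (forall k, k \notin Ks -> xd k 0 = 0).

Definition dual_basic_sol (A : 'M[R]_(K, J)) (c : 'cV[R]_J)
    (Ks : {set 'I_K}) (Js : {set 'I_J}) (p : 'cV[R]_K) (qd : 'cV[R]_J) : Prop :=
  A^T *m p - qd = c /\ (forall k, k \in Ks -> p k 0 = 0) /\
  (forall j, j \notin Js -> qd j 0 = 0).

(* Base sequence B_1..B_N (indices 1..N of Ks, Js with rates u, xd, p, qd),
   together with index sets Ks 0, Js 0, Ks (N+1), Js (N+1). *)
Definition base_sequence (A : 'M[R]_(K, J)) (b : 'cV[R]_K) (c : 'cV[R]_J) (N : nat)
    (Ks : nat -> {set 'I_K}) (Js : nat -> {set 'I_J})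
    (u : nat -> 'cV[R]_J) (xd : nat -> 'cV[R]_K)
    (p : nat -> 'cV[R]_K) (qd : nat -> 'cV[R]_J) : Prop :=
  (0 < N)%N /\
  (forall n, (1 <= n <= N)%N ->
     [/\ is_base A (Ks n) (Js n),
         primal_basic_sol A b (Ks n) (Js n) (u n) (xd n),
         dual_basic_sol A c (Ks n) (Js n) (p n) (qd n),
         vnonneg (u n) & vnonneg (p n)]) /\
  (* adjacency: one pivot between consecutive bases *)
  (forall n, (1 <= n < N)%N ->
     #|basic_set (Ks n) (Js n) :\: basic_set (Ks n.+1) (Js n.+1)| = 1%N /\
     #|basic_set (Ks n.+1) (Js n.+1) :\: basic_set (Ks n) (Js n)| = 1%N) /\
  Ks 0%N \subset Ks 1%N /\ Js N.+1 \subset Js N.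

Definition xstate (x0 : 'cV[R]_K) (xd : nat -> 'cV[R]_K) (tau : nat -> R) (n : nat)
  : 'cV[R]_K := x0 + \sum_(1 <= m < n.+1) tau m *: xd m.
Definition qstate (N : nat) (qN : 'cV[R]_J) (qd : nat -> 'cV[R]_J) (tau : nat -> R)
    (n : nat) : 'cV[R]_J := qN + \sum_(n.+1 <= m < N.+1) tau m *: qd m.

Definition base_seq_system (A : 'M[R]_(K, J)) (beta : 'cV[R]_K) (gamma : 'cV[R]_J)
    (T : R) (N : nat)
    (Ks : nat -> {set 'I_K}) (Js : nat -> {set 'I_J})
    (xd : nat -> 'cV[R]_K) (qd : nat -> 'cV[R]_J)
    (bu0 buN qN bq0 : 'cV[R]_J) (x0 bxN bp0 bpN : 'cV[R]_K) (tau : nat -> R) : Prop :=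
  let x := xstate x0 xd tau in
  let q := qstate N qN qd tau in
  (* (a): v_n is the primal variable leaving from B_n to B_{n+1} *)
  (forall n, (1 <= n < N)%N ->
     forall v, v \in basic_set (Ks n) (Js n) :\: basic_set (Ks n.+1) (Js n.+1) ->
       match v with inr k => x n k 0 = 0 | inl j => q n j 0 = 0 end) /\
  \sum_(1 <= n < N.+1) tau n = T /\
  (forall j, j \in Js 0%N -> bu0 j 0 = 0) /\
  (forall k, k \notin Ks 0%N -> x0 k 0 = 0) /\
  (forall k, k \in Ks 0%N -> bp0 k 0 = 0) /\
  (forall j, j \notin Js 0%N -> bq0 j 0 = 0) /\
  (forall k, k \in Ks N.+1 -> bpN k 0 = 0) /\
  (forall j, j \notin Js N.+1 -> qN j 0 = 0) /\
  (forall j, j \in Js N.+1 -> buN j 0 = 0) /\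
  (forall k, k \notin Ks N.+1 -> bxN k 0 = 0) /\
  A *m bu0 + x0 = beta /\ A^T *m bpN - qN = gamma /\
  A *m buN + bxN - x N = 0 /\ A^T *m bp0 - bq0 + q 0%N = 0.

Definition base_seq_sol_nonneg (N : nat) (xd : nat -> 'cV[R]_K) (qd : nat -> 'cV[R]_J)
    (bu0 buN qN bq0 : 'cV[R]_J) (x0 bxN bp0 bpN : 'cV[R]_K) (tau : nat -> R) : Prop :=
  [/\ forall n, (1 <= n <= N)%N -> 0 <= tau n,
      vnonneg bu0 /\ vnonneg buN /\ vnonneg qN /\ vnonneg bq0,
      vnonneg x0 /\ vnonneg bxN /\ vnonneg bp0 /\ vnonneg bpN,
      (forall n, (n <= N)%N -> vnonneg (xstate x0 xd tau n)) &
      (forall n, (n <= N)%N -> vnonneg (qstate N qN qd tau n))].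

Definition checkU (N : nat) (u : nat -> 'cV[R]_J) (tau : nat -> R) : 'cV[R]_J :=
  \sum_(1 <= n < N.+1) tau n *: u n.
Definition checkP (N : nat) (p : nat -> 'cV[R]_K) (tau : nat -> R) : 'cV[R]_K :=
  \sum_(1 <= n < N.+1) tau n *: p n.

Definition xunder (N : nat) (xd : nat -> 'cV[R]_K) (tau : nat -> R) : 'cV[R]_K :=
  \col_k (- \big[Num.min/0]_(1 <= n < N.+1) \sum_(1 <= m < n.+1) xd m k 0 * tau m).
Definition qunder (N : nat) (qd : nat -> 'cV[R]_J) (tau : nat -> R) : 'cV[R]_J :=
  \col_j (- \big[Num.min/0]_(1 <= n < N.+1) \sum_(n <= m < N.+1) qd m j 0 * tau m).

Definition dotv n (v w : 'cV[R]_n) : R := \sum_i v i 0 * w i 0.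

End Defs.

(* Main.v *)
Require Import Defs.
From HB Require Import structures.
From mathcomp Require Import all_boot all_order all_algebra.
From mathcomp Require Import lra zify.
Import Order.TTheory GRing.Theory Num.Theory.
Set Implicit Arguments. Unset Strict Implicit. Unset Printing Implicit Defensive.
Local Open Scope ring_scope.

Section H.
Variable R : realFieldType.

Lemma dotvE n (v w : 'cV[R]_n) : dotv v w = (v^T *m w) 0 0.
Proof. by rewrite /dotv !mxE; apply: eq_bigr => i _; rewrite mxE. Qed.

Lemma dotv_mul m n (M : 'M[R]_(m, n)) (y : 'cV_m) (v : 'cV_n) :
  dotv (M^T *m y) v = dotv y (M *m v).
Proof. by rewrite !dotvE trmx_mul trmxK mulmxA. Qed.

Lemma dotvDl n (v1 v2 w : 'cV[R]_n) : dotv (v1 + v2) w = dotv v1 w + dotv v2 w.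
Proof. by rewrite /dotv -big_split; apply: eq_bigr => i _; rewrite mxE mulrDl. Qed.

Lemma dotvDr n (v w1 w2 : 'cV[R]_n) : dotv v (w1 + w2) = dotv v w1 + dotv v w2.
Proof. by rewrite /dotv -big_split; apply: eq_bigr => i _; rewrite mxE mulrDr. Qed.

Lemma dotv_ge0 n (v w : 'cV[R]_n) : vnonneg v -> vnonneg w -> 0 <= dotv v w.
Proof. by move=> hv hw; apply: sumr_ge0 => i _; apply: mulr_ge0. Qed.

Lemma dotv_ler n (y v w : 'cV[R]_n) : vnonneg y -> vle v w -> dotv y v <= dotv y w.
Proof. by move=> hy hvw; apply: ler_sum => i _; apply: ler_wpM2l. Qed.

Lemma dotv_lel n (y v w : 'cV[R]_n) : vnonneg y -> vle v w -> dotv v y <= dotv w y.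
Proof. by move=> hy hvw; apply: ler_sum => i _; apply: ler_wpM2r. Qed.

Lemma dotv_compl n (v w : 'cV[R]_n) : (forall i, v i 0 = 0 \/ w i 0 = 0) -> dotv v w = 0.
Proof. by move=> h; apply: big1 => i _; case: (h i) => ->; rewrite ?mul0r ?mulr0. Qed.

Lemma mxentry m n (X Y : 'M[R]_(m, n)) i j : X = Y -> X i j = Y i j.
Proof. by move->. Qed.

Lemma lp_max m n (M : 'M[R]_(m, n)) (g1 g2 t1 t2 z0 zN : 'cV_n)
  (r1 r2 y1 y2 s1 s2 : 'cV_m) :
  M^T *m (y1 + y2) = g1 + t1 -> M^T *m y2 = g2 + t2 ->
  M *m z0 + s1 = r1 -> M *m z0 + M *m zN + s2 = r2 ->
  vnonneg y1 -> vnonneg y2 -> vnonneg t1 -> vnonneg t2 -> vnonneg s1 -> vnonneg s2 ->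
  vnonneg z0 -> vnonneg zN ->
  dotv t1 z0 = 0 -> dotv t2 zN = 0 -> dotv y1 s1 = 0 -> dotv y2 s2 = 0 ->
  [/\ vle (M *m z0) r1, vle (M *m z0 + M *m zN) r2, vnonneg z0 & vnonneg zN] /\
  forall v0 vN, [/\ vle (M *m v0) r1, vle (M *m v0 + M *m vN) r2, vnonneg v0 & vnonneg vN] ->
    dotv g1 v0 + dotv g2 vN <= dotv g1 z0 + dotv g2 zN.
Proof.
move=> H1 H2 H3 H4 ny1 ny2 nt1 nt2 ns1 ns2 nz0 nzN c1 c2 c3 c4; split.
  split=> // i; [rewrite -H3|rewrite -H4]; rewrite !mxE; [have := ns1 i|have := ns2 i]; lra.
move=> v0 vN [f1 f2 nv0 nvN].
have A1 : dotv y1 (M *m v0) + dotv y2 (M *m v0) + dotv y2 (M *m vN)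
   = dotv g1 v0 + dotv t1 v0 + dotv g2 vN + dotv t2 vN.
  by rewrite -dotvDl -!dotv_mul H1 H2 !dotvDl addrA.
have A2 : dotv y1 (M *m z0) + dotv y2 (M *m z0) + dotv y2 (M *m zN)
   = dotv g1 z0 + dotv t1 z0 + dotv g2 zN + dotv t2 zN.
  by rewrite -dotvDl -!dotv_mul H1 H2 !dotvDl addrA.
have B1 := dotv_ler ny1 f1.
have B2 := dotv_ler ny2 f2; rewrite dotvDr in B2.
have E1 : dotv y1 r1 = dotv y1 (M *m z0) + dotv y1 s1 by rewrite -H3 dotvDr.
have E2 : dotv y2 r2 = dotv y2 (M *m z0) + dotv y2 (M *m zN) + dotv y2 s2
  by rewrite -H4 !dotvDr.
have P1 := dotv_ge0 nt1 nv0. have P2 := dotv_ge0 nt2 nvN.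
lra.
Qed.

Lemma lp_min m n (M : 'M[R]_(m, n)) (h1 h2 t1 t2 zN z0 : 'cV_n)
  (r1 r2 y1 y2 s1 s2 : 'cV_m) :
  M^T *m (y1 + y2) + t1 = h1 -> M^T *m y2 + t2 = h2 ->
  M *m zN = r1 + s1 -> M *m zN + M *m z0 = r2 + s2 ->
  vnonneg y1 -> vnonneg y2 -> vnonneg t1 -> vnonneg t2 -> vnonneg s1 -> vnonneg s2 ->
  vnonneg zN -> vnonneg z0 ->
  dotv t1 zN = 0 -> dotv t2 z0 = 0 -> dotv y1 s1 = 0 -> dotv y2 s2 = 0 ->
  [/\ vle r1 (M *m zN), vle r2 (M *m zN + M *m z0), vnonneg zN & vnonneg z0] /\
  forall wN w0, [/\ vle r1 (M *m wN), vle r2 (M *m wN + M *m w0), vnonneg wN & vnonneg w0] ->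
    dotv h1 zN + dotv h2 z0 <= dotv h1 wN + dotv h2 w0.
Proof.
move=> H1 H2 H3 H4 ny1 ny2 nt1 nt2 ns1 ns2 nzN nz0 c1 c2 c3 c4; split.
  split=> // i; [rewrite H3|rewrite H4]; rewrite !mxE; [have := ns1 i|have := ns2 i]; lra.
move=> wN w0 [f1 f2 nwN nw0].
have A1 : dotv y1 (M *m wN) + dotv y2 (M *m wN) + dotv y2 (M *m w0) + dotv t1 wN + dotv t2 w0
   = dotv h1 wN + dotv h2 w0.
  by rewrite -dotvDl -!dotv_mul -H1 -H2 !dotvDl; lra.
have A2 : dotv y1 (M *m zN) + dotv y2 (M *m zN) + dotv y2 (M *m z0) + dotv t1 zN + dotv t2 z0
   = dotv h1 zN + dotv h2 z0.
  by rewrite -dotvDl -!dotv_mul -H1 -H2 !dotvDl; lra.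
have B1 := dotv_ler ny1 f1.
have B2 := dotv_ler ny2 f2; rewrite dotvDr in B2.
have E1 : dotv y1 (M *m zN) = dotv y1 r1 + dotv y1 s1 by rewrite H3 dotvDr.
have E2 : dotv y2 (M *m zN) + dotv y2 (M *m z0) = dotv y2 r2 + dotv y2 s2
  by rewrite -dotvDr H4 !dotvDr.
have P1 := dotv_ge0 nt1 nwN. have P2 := dotv_ge0 nt2 nw0.
lra.
Qed.

Lemma bigmin_le0 (s : seq nat) (F : nat -> R) (x : R) :
  \big[Num.min/x]_(i <- s) F i <= x.
Proof.
elim: s => [|a s IH]; first by rewrite big_nil.
by rewrite big_cons ge_min IH orbT.
Qed.

Lemma bigmin_leF (s : seq nat) (F : nat -> R) (x : R) n :
  n \in s -> \big[Num.min/x]_(i <- s) F i <= F n.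
Proof.
elim: s => [|a s IH] //; rewrite inE big_cons ge_min => /orP[/eqP->|h].
  by rewrite lexx.
by rewrite IH ?orbT.
Qed.

Lemma bigmin_ge (s : seq nat) (F : nat -> R) (x y : R) :
  y <= x -> (forall n, n \in s -> y <= F n) -> y <= \big[Num.min/x]_(i <- s) F i.
Proof.
move=> hx hF; rewrite big_seq; apply: (big_ind (fun z => y <= z)) => //.
by move=> a b ha hb; rewrite le_min ha hb.
Qed.


Lemma addE m n (X Y : 'M[R]_(m, n)) i j : (X + Y) i j = X i j + Y i j.
Proof. by rewrite mxE. Qed.
Lemma oppE m n (X : 'M[R]_(m, n)) i j : (- X) i j = - X i j.
Proof. by rewrite mxE. Qed.
Lemma scaleE m n a (X : 'M[R]_(m, n)) i j : (a *: X) i j = a * X i j.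
Proof. by rewrite mxE. Qed.

Lemma dotvZl n a (v w : 'cV[R]_n) : dotv (a *: v) w = a * dotv v w.
Proof. by rewrite /dotv mulr_sumr; apply: eq_bigr => i _; rewrite mxE mulrA. Qed.
Lemma dotv0l n (w : 'cV[R]_n) : dotv 0 w = 0.
Proof. by apply: big1 => i _; rewrite mxE mul0r. Qed.
Lemma dotv_suml n (r : seq nat) (a : nat -> R) (v : nat -> 'cV[R]_n) w :
  dotv (\sum_(m <- r) a m *: v m) w = \sum_(m <- r) a m * dotv (v m) w.
Proof.
elim: r => [|x r IH]; first by rewrite !big_nil dotv0l.
by rewrite !big_cons dotvDl dotvZl IH.
Qed.

Lemma vnonneg_sum n N (tau : nat -> R) (v : nat -> 'cV[R]_n) :
  (forall m, (1 <= m <= N)%N -> 0 <= tau m) ->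
  (forall m, (1 <= m <= N)%N -> vnonneg (v m)) ->
  vnonneg (\sum_(1 <= m < N.+1) tau m *: v m).
Proof.
move=> ht hv i; rewrite summxE big_seq; apply: sumr_ge0 => m.
rewrite mem_index_iota ltnS => hm; rewrite mxE; apply: mulr_ge0; [exact: ht|exact: hv].
Qed.

Lemma vnonneg_add n (v w : 'cV[R]_n) : vnonneg v -> vnonneg w -> vnonneg (v + w).
Proof. by move=> hv hw i; rewrite mxE; apply: addr_ge0. Qed.

End H.

Unset Implicit Arguments.

Theorem mainTheorem4 (R : realFieldType) (K J : nat) (A : 'M[R]_(K, J))
    (beta b : 'cV[R]_K) (gamma c : 'cV[R]_J) (T : R) (hT : 0 < T)
    (N : nat) (Ks : nat -> {set 'I_K}) (Js : nat -> {set 'I_J})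
    (u : nat -> 'cV[R]_J) (xd : nat -> 'cV[R]_K)
    (p : nat -> 'cV[R]_K) (qd : nat -> 'cV[R]_J)
    (bu0 buN qN bq0 : 'cV[R]_J) (x0 bxN bp0 bpN : 'cV[R]_K) (tau : nat -> R) :
  nondegenerate_I A b c ->
  base_sequence A b c N Ks Js u xd p qd ->
  base_seq_system A beta gamma T N Ks Js xd qd bu0 buN qN bq0 x0 bxN bp0 bpN tau ->
  base_seq_sol_nonneg N xd qd bu0 buN qN bq0 x0 bxN bp0 bpN tau ->
  let xu := xunder N xd tau in
  let qu := qunder N qd tau in
  let Uc := checkU N u tau in
  let Pc := checkP N p tau in
  let primal_feas (v0 vN : 'cV[R]_J) :=
    [/\ vle (A *m v0) (beta - xu),
        vle (A *m v0 + A *m vN) (beta + T *: b - A *m Uc),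
        vnonneg v0 & vnonneg vN] in
  let dual_feas (wN w0 : 'cV[R]_K) :=
    [/\ vle (gamma + qu) (A^T *m wN),
        vle (gamma + T *: c - A^T *m Pc) (A^T *m wN + A^T *m w0),
        vnonneg wN & vnonneg w0] in
  (primal_feas bu0 buN /\
   forall v0 vN, primal_feas v0 vN ->
     dotv (gamma + T *: c) v0 + dotv gamma vN
       <= dotv (gamma + T *: c) bu0 + dotv gamma buN) /\
  (dual_feas bpN bp0 /\
   forall wN w0, dual_feas wN w0 ->
     dotv (beta + T *: b) bpN + dotv beta bp0
       <= dotv (beta + T *: b) wN + dotv beta w0).
Proof.
move=> _ [hN [hbs [hadj [hK0 hJN]]]]
  [Ha [Hb [c1 [c2 [c3 [c4 [c5 [c6 [c7 [c8 [d1 [d2 [e1 e2]]]]]]]]]]]]]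
  [htau [nbu0 [nbuN [nqN nbq0]]] [nx0 [nbxN [nbp0 nbpN]]] nxs nqs]
  xu qu Uc Pc pf df.
have CX : forall m k, (m <= N)%N -> k \notin Ks m -> xstate x0 xd tau m k 0 = 0.
  elim=> [|m IH] k hm hk.
    by rewrite /xstate big_geq // addr0; apply: c2.
  have hm1 : (1 <= m.+1 <= N)%N by lia.
  have [_ [_ [_ hxd]] _ _ _] := hbs _ hm1.
  have -> : xstate x0 xd tau m.+1 = xstate x0 xd tau m + tau m.+1 *: xd m.+1.
    by rewrite /xstate big_nat_recr //= addrA.
  rewrite addE scaleE (hxd k hk) mulr0 addr0.
  case hkm: (k \in Ks m); last by apply: IH; [lia | rewrite hkm].
  case: m IH hm hm1 hkm hk {hxd} => [|m] IH hm hm1 hkm hk.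
    by move: hk; rewrite (subsetP hK0 _ hkm).
  have := Ha m.+1 _ (inr k); apply; first by lia.
  by rewrite /basic_set !inE /= hkm hk.
have CQ : forall d n, (n + d = N)%N -> forall j, j \notin Js n.+1 ->
    qstate N qN qd tau n j 0 = 0.
  elim=> [|d IH] n hnd j hj.
    rewrite addn0 in hnd; subst n.
    by rewrite /qstate big_geq // addr0; apply: c6.
  have hn1 : (1 <= n.+1 <= N)%N by lia.
  have [_ _ [_ [_ hqd]] _ _] := hbs _ hn1.
  have -> : qstate N qN qd tau n = qstate N qN qd tau n.+1 + tau n.+1 *: qd n.+1.
    by rewrite /qstate big_ltn; [rewrite addrCA addrC | lia].
  rewrite addE scaleE (hqd j hj) mulr0 addr0.
  case hjn: (j \in Js n.+2); last by apply: IH; [lia | rewrite hjn].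
  case: d IH hnd => [|d] IH hnd.
    have eN : N = n.+1 by lia.
    by clear hnd; subst N; move: hj; rewrite (subsetP hJN _ hjn).
  have := Ha n.+1 _ (inl j); apply; first by lia.
  by rewrite /basic_set !inE /= hjn hj.
have CQ' : forall n, (n <= N)%N -> forall j, j \notin Js n.+1 ->
    qstate N qN qd tau n j 0 = 0.
  by move=> n hn; apply: (CQ (N - n)%N); lia.
have Fx : forall k n, xstate x0 xd tau n k 0 =
    x0 k 0 + \sum_(1 <= m < n.+1) xd m k 0 * tau m.
  move=> k n; rewrite /xstate addE summxE; congr (_ + _).
  by apply: eq_bigr => m _; rewrite scaleE mulrC.
have Fq : forall j n, qstate N qN qd tau n j 0 =
    qN j 0 + \sum_(n.+1 <= m < N.+1) qd m j 0 * tau m.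
  move=> j n; rewrite /qstate addE summxE; congr (_ + _).
  by apply: eq_bigr => m _; rewrite scaleE mulrC.
have BX : forall k, 0 <= (x0 - xu) k 0 /\
    forall n, (n <= N)%N -> (x0 - xu) k 0 <= xstate x0 xd tau n k 0.
  move=> k; rewrite addE oppE /xu /xunder mxE opprK; split.
    have : - x0 k 0 <= \big[Num.min/0]_(1 <= n < N.+1)
                      \sum_(1 <= m < n.+1) xd m k 0 * tau m.
      apply: bigmin_ge; first by have := nx0 k; lra.
      move=> n; rewrite mem_index_iota ltnS => /andP[hn0 hn].
      by have := nxs n hn k; rewrite Fx; lra.
    lra.
  move=> n hn; rewrite Fx; case: n hn => [|n] hn.
    by rewrite [\sum_(1 <= m < 1) _]big_geq // lerD2l bigmin_le0.
  rewrite lerD2l; apply: (bigmin_leF (fun n => \sum_(1 <= m < n.+1) xd m k 0 * tau m) 0).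
  by rewrite mem_index_iota; lia.
have BQ : forall j, 0 <= (qN - qu) j 0 /\
    forall n, (n <= N)%N -> (qN - qu) j 0 <= qstate N qN qd tau n j 0.
  move=> j; rewrite addE oppE /qu /qunder mxE opprK; split.
    have : - qN j 0 <= \big[Num.min/0]_(1 <= n < N.+1)
                      \sum_(n <= m < N.+1) qd m j 0 * tau m.
      apply: bigmin_ge; first by have := nqN j; lra.
      move=> n; rewrite mem_index_iota ltnS => /andP[hn0 hn].
      have := nqs n.-1 (leq_trans (leq_pred n) hn) j.
      by rewrite Fq prednK //; lra.
    lra.
  move=> n hn; rewrite Fq; case: (ltngtP n N) hn => // hnN _.
    rewrite lerD2l; apply: (bigmin_leF (fun n => \sum_(n <= m < N.+1) qd m j 0 * tau m) 0).
    by rewrite mem_index_iota; lia.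
  by subst n; rewrite [\sum_(N.+1 <= m < N.+1) _]big_geq // lerD2l bigmin_le0.
have hS : \sum_(1 <= m < N.+1) tau m *: xd m + A *m Uc = T *: b.
  rewrite /Uc /checkU mulmx_sumr -big_split /= -Hb scaler_suml.
  apply: eq_big_nat => m hm.
  have hm' : (1 <= m <= N)%N by lia.
  have [_ [hpr _] _ _ _] := hbs m hm'.
  by rewrite -scalemxAr -scalerDr addrC hpr.
have hQ : A^T *m Pc - \sum_(1 <= m < N.+1) tau m *: qd m = T *: c.
  rewrite /Pc /checkP mulmx_sumr -sumrB -Hb scaler_suml.
  apply: eq_big_nat => m hm.
  have hm' : (1 <= m <= N)%N by lia.
  have [_ _ [hdu _] _ _] := hbs m hm'.
  by rewrite -scalemxAr -scalerBr hdu.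
rewrite /xstate in e1; rewrite /qstate in e2.
have H1 : A^T *m (bp0 + Pc + bpN) = gamma + T *: c + bq0.
  rewrite !mulmxDr; apply/matrixP => i j.
  have := mxentry i j e2; have := mxentry i j d2; have := mxentry i j hQ.
  rewrite !mxE; lra.
have H2 : A^T *m bpN = gamma + qN.
  apply/matrixP => i j; have := mxentry i j d2; rewrite !mxE; lra.
have H3 : A *m bu0 + (x0 - xu) = beta - xu.
  apply/matrixP => i j; have := mxentry i j d1; rewrite !mxE; lra.
have H4 : A *m bu0 + A *m buN + bxN = beta + T *: b - A *m Uc.
  apply/matrixP => i j.
  have := mxentry i j e1; have := mxentry i j d1; have := mxentry i j hS.
  rewrite !mxE; lra.
have G1 : A^T^T *m (buN + Uc + bu0) + bxN = beta + T *: b.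
  rewrite trmxK !mulmxDr; apply/matrixP => i j.
  have := mxentry i j e1; have := mxentry i j d1; have := mxentry i j hS.
  rewrite !mxE; lra.
have G2 : A^T^T *m bu0 + x0 = beta by rewrite trmxK.
have G3 : A^T *m bpN = gamma + qu + (qN - qu).
  apply/matrixP => i j; have := mxentry i j d2; rewrite !mxE; lra.
have G4 : A^T *m bpN + A^T *m bp0 = gamma + T *: c - A^T *m Pc + bq0.
  apply/matrixP => i j.
  have := mxentry i j e2; have := mxentry i j d2; have := mxentry i j hQ.
  rewrite !mxE; lra.
have nPc : vnonneg Pc.
  apply: vnonneg_sum => // m hm; by case: (hbs m hm).
have nUc : vnonneg Uc.
  apply: vnonneg_sum => // m hm; by case: (hbs m hm).
have ns1 : vnonneg (x0 - xu) by move=> i; case: (BX i).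
have ns1' : vnonneg (qN - qu) by move=> i; case: (BQ i).
have sx0 : forall i n, (n <= N)%N -> xstate x0 xd tau n i 0 = 0 -> (x0 - xu) i 0 = 0.
  move=> i n hn hz; have [h1 h2] := BX i; have := h2 n hn; rewrite hz; lra.
have sq0 : forall i n, (n <= N)%N -> qstate N qN qd tau n i 0 = 0 -> (qN - qu) i 0 = 0.
  move=> i n hn hz; have [h1 h2] := BQ i; have := h2 n hn; rewrite hz; lra.
have cp1 : dotv bq0 bu0 = 0.
  apply: dotv_compl => i; case: (boolP (i \in Js 0%N)) => h; [right; exact: c1|left; exact: c4].
have cp2 : dotv qN buN = 0.
  apply: dotv_compl => i; case: (boolP (i \in Js N.+1)) => h; [right; exact: c7|left; exact: c6].
have cp3 : dotv (bp0 + Pc) (x0 - xu) = 0.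
  rewrite dotvDl /Pc /checkP dotv_suml.
  rewrite (dotv_compl (v := bp0)); last first.
    move=> i; case: (boolP (i \in Ks 0%N)) => h; first by left; exact: c3.
    by right; apply: (sx0 i 0%N) => //; apply: CX.
  rewrite add0r big_seq; apply: big1 => m; rewrite mem_index_iota => hm.
  have hm' : (1 <= m <= N)%N by lia.
  have [_ _ [_ [hp0 _]] _ _] := hbs m hm'.
  rewrite (dotv_compl (v := p m)) ?mulr0 // => i.
  case: (boolP (i \in Ks m)) => h; first by left; exact: hp0.
  by right; apply: (sx0 i m); [lia | apply: CX; [lia | exact: h]].
have cp4 : dotv bpN bxN = 0.
  apply: dotv_compl => i; case: (boolP (i \in Ks N.+1)) => h; [left; exact: c5|right; exact: c8].
have cq1 : dotv bxN bpN = 0.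
  apply: dotv_compl => i; case: (boolP (i \in Ks N.+1)) => h; [right; exact: c5|left; exact: c8].
have cq2 : dotv x0 bp0 = 0.
  apply: dotv_compl => i; case: (boolP (i \in Ks 0%N)) => h; [right; exact: c3|left; exact: c2].
have cq3 : dotv (buN + Uc) (qN - qu) = 0.
  rewrite dotvDl /Uc /checkU dotv_suml.
  rewrite (dotv_compl (v := buN)); last first.
    move=> i; case: (boolP (i \in Js N.+1)) => h; first by left; exact: c7.
    by right; apply: (sq0 i N) => //; apply: CQ'.
  rewrite add0r big_seq; apply: big1 => m; rewrite mem_index_iota => hm.
  have hm' : (1 <= m <= N)%N by lia.
  have [_ [_ [hu0 _]] _ _ _] := hbs m hm'.
  rewrite (dotv_compl (v := u m)) ?mulr0 // => i.
  case: (boolP (i \in Js m)) => h; first by left; exact: hu0.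
  right; apply: (sq0 i m.-1); first lia.
  apply: CQ'; first lia.
  by rewrite prednK //; lia.
have cq4 : dotv bu0 bq0 = 0.
  apply: dotv_compl => i; case: (boolP (i \in Js 0%N)) => h; [left; exact: c1|right; exact: c4].
split.
  exact: (lp_max H1 H2 H3 H4 (vnonneg_add nbp0 nPc) nbpN nbq0 nqN ns1 nbxN nbu0 nbuN
           cp1 cp2 cp3 cp4).
exact: (lp_min G1 G2 G3 G4 (vnonneg_add nbuN nUc) nbu0 nbxN nx0 ns1' nbq0 nbpN nbp0
           cq1 cq2 cq3 cq4).
Qed.
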